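(* Let $R$ be a commutative ring with $1$, let $M$ be an le-module over $R$, and suppose the natural map $\psi:\mathrm{Spec}(M)\to\mathrm{Spec}(R/Ann(M))$ is surjective. Then: (i) a subset $Y\subseteq\mathrm{Spec}(M)$ is an irreducible closed subset of $\mathrm{Spec}(M)$ if and only if $Y=V^*(p)$ for some $p\in\mathrm{Spec}(M)$; every irreducible closed subset of $\mathrm{Spec}(M)$ has a generic point; (ii) the correspondence $p\mapsto V^*(p)$ is a surjection of $\mathrm{Spec}(M)$ onto the set of irreducible closed subsets of $\mathrm{Spec}(M)$; (iii) the correspondence $V^*(p)\mapsto (p:e)/Ann(M)$ is a bijection of the set of irreducible components of $\mathrm{Spec}(M)$ onto the set of minimal prime ideals of $R/Ann(M)$.
   Context: An le-module over $R$ is a complete lattice $(M,\leq)$ with greatest element $e$, with a commutative monoid operation $+$ (identity $0_M$) satisfying $m+\bigvee_{i}m_i=\bigvee_i(m+m_i)$ for all families, and a map $R\times M\to M$, $(r,m)\mapsto rm$, such that for all $r,r_1,r_2\in R$, $m,m_1,m_2,m_i\in M$: $r(m_1+m_2)=rm_1+rm_2$; $(r_1+r_2)m\leq r_1m+r_2m$; $(r_1r_2)m=r_1(r_2m)$; $1_Rm=m$; $0_Rm=r0_M=0_M$; $r(\bigvee_i m_i)=\bigvee_i rm_i$. A submodule element is $n\in M$ with $n+n\leq n$ and $rn\leq n$ for all $r\in R$; it is proper if $n\neq e$. For $n\in M$ put $(n:e)=\{r\in R: re\leq n\}$, and $Ann(M)=(0_M:e)$. A prime submodule element is a proper submodule element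 $p$ such that for all $r\in R$, $n\in M$, $rn\leq p$ implies $r\in(p:e)$ or $n\leq p$; $\mathrm{Spec}(M)$ denotes the set of prime submodule elements. For a submodule element $n$, $V^*(n)=\{p\in\mathrm{Spec}(M):(n:e)\subseteq(p:e)\}$; the Zariski topology on $\mathrm{Spec}(M)$ has as closed sets exactly the sets $V^*(n)$, $n$ a submodule element. For $p\in\mathrm{Spec}(M)$, $(p:e)$ is a prime ideal containing $Ann(M)$ and the natural map is $\psi(p)=(p:e)/Ann(M)$. A generic point of a closed set $Y$ is $y\in Y$ with $Y=\overline{\{y\}}$; an irreducible component is a maximal irreducible subset. *)

(* Defs.v *)
From mathcomp Require Import all_boot all_algebra.
From mathcomp Require Import boolp classical_sets.
Set Implicit Arguments. Unset Strict Implicit. Unset Printing Implicit Defensive.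
Import GRing.Theory.
Local Open Scope classical_set_scope.
Local Open Scope ring_scope.

(* Joins of families are represented as suprema of subsets of M        *)
(* (the join of a family (m_i)_i is the sup of its image set).         *)
Record leModule (R : comNzRingType) := LeModule {
  lm_car :> Type;
  lm_le : lm_car -> lm_car -> Prop;
  lm_sup : set lm_car -> lm_car;
  lm_top : lm_car;
  lm_add : lm_car -> lm_car -> lm_car;
  lm_zero : lm_car;
  lm_act : R -> lm_car -> lm_car;
  lm_le_refl : forall m, lm_le m m;
  lm_le_antisym : forall m n, lm_le m n -> lm_le n m -> m = n;
  lm_le_trans : forall m n k, lm_le m n -> lm_le n k -> lm_le m k;
  lm_sup_ub : forall (S : set lm_car) m, S m -> lm_le m (lm_sup S);
  lm_sup_least : forall (S : set lm_car) u,
      (forall m, S m -> lm_le m u) -> lm_le (lm_sup S) u;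
  lm_top_greatest : forall m, lm_le m lm_top;
  lm_addC : forall m n, lm_add m n = lm_add n m;
  lm_addA : forall m n k, lm_add m (lm_add n k) = lm_add (lm_add m n) k;
  lm_add0 : forall m, lm_add m lm_zero = m;
  lm_add_sup : forall m (S : set lm_car), S !=set0 ->
      lm_add m (lm_sup S) = lm_sup [set lm_add m x | x in S];
  lm_actD : forall r m1 m2, lm_act r (lm_add m1 m2) = lm_add (lm_act r m1) (lm_act r m2);
  lm_addr_act : forall r1 r2 m,
      lm_le (lm_act (r1 + r2) m) (lm_add (lm_act r1 m) (lm_act r2 m));
  lm_actM : forall r1 r2 m, lm_act (r1 * r2) m = lm_act r1 (lm_act r2 m);
  lm_act1 : forall m, lm_act 1 m = m;
  lm_act0r : forall m, lm_act 0 m = lm_zero;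
  lm_act0 : forall r, lm_act r lm_zero = lm_zero;
  lm_act_sup : forall r (S : set lm_car),
      lm_act r (lm_sup S) = lm_sup [set lm_act r x | x in S]
}.

Section LeModuleDefs.
Variables (R : comNzRingType) (M : leModule R).

Local Notation le := (@lm_le R M).
Local Notation e := (@lm_top R M).

Definition submodule_elt (n : M) : Prop :=
  le (lm_add n n) n /\ forall r : R, le (lm_act r n) n.

Definition colon (n : M) : set R := [set r | le (lm_act r e) n].

Definition Ann : set R := colon (lm_zero M).

Definition prime_elt (p : M) : Prop :=
  submodule_elt p /\ p <> e /\
  forall (r : R) (n : M), le (lm_act r n) p -> colon p r \/ le n p.

Definition SpecM : set M := [set p | prime_elt p].

Definition Vstar (n : M) : set M := [set p | prime_elt p /\ colon n `<=` colon p].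

Definition zclosed (Y : set M) : Prop := exists n, submodule_elt n /\ Y = Vstar n.

Definition zclosure (S : set M) : set M :=
  [set x | forall F, zclosed F -> S `<=` F -> F x].

Definition zirreducible (Y : set M) : Prop :=
  Y `<=` SpecM /\ Y !=set0 /\
  forall F1 F2, zclosed F1 -> zclosed F2 -> Y `<=` F1 `|` F2 -> Y `<=` F1 \/ Y `<=` F2.

Definition generic_point (Y : set M) (y : M) : Prop := Y y /\ Y = zclosure [set y].

Definition irreducible_component (Y : set M) : Prop :=
  zirreducible Y /\ forall Z, zirreducible Z -> Y `<=` Z -> Z = Y.

End LeModuleDefs.

Section Ideals.
Variable R : comNzRingType.

Definition is_ideal (I : set R) : Prop :=
  I 0 /\ (forall x y, I x -> I y -> I (x + y)) /\ (forall r x, I x -> I (r * x)).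

Definition prime_ideal (P : set R) : Prop :=
  is_ideal P /\ ~ P 1 /\ forall a b, P (a * b) -> P a \/ P b.

(* Prime ideals of R/J  <->  prime ideals of R containing J. *)
Definition prime_over (J P : set R) : Prop := prime_ideal P /\ J `<=` P.

(* Minimal prime ideals of R/J  <->  prime ideals of R minimal over J. *)
Definition minimal_prime_over (J P : set R) : Prop :=
  prime_over J P /\ forall Q, prime_over J Q -> Q `<=` P -> Q = P.

End Ideals.

(* Main.v *)
Require Import Defs.
From mathcomp Require Import all_boot all_algebra.
From mathcomp Require Import boolp classical_sets.
Local Open Scope classical_set_scope.

(* psi : Spec(M) -> Spec(R/Ann(M)), p |-> (p:e)/Ann(M), is encoded via the
   correspondence Spec(R/Ann(M)) = { prime ideals P of R with Ann(M) ⊆ P },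
   so psi p corresponds to (p:e). *)

Set Implicit Arguments. Unset Strict Implicit.
Section Helpers.
Variables (R : comNzRingType) (M : leModule R).
Local Open Scope ring_scope.
Local Notation le := (@lm_le R M).
Local Notation e := (@lm_top R M).
Local Notation add := (@lm_add R M).
Local Notation act := (@lm_act R M).

Lemma sup2 (m n : M) : le m n -> lm_sup [set x | x = m \/ x = n] = n.
Proof.
move=> h; apply: lm_le_antisym.
  by apply: lm_sup_least => x [->|->] //; apply: lm_le_refl.
by apply: lm_sup_ub; right.
Qed.

Lemma add_mono (k m n : M) : le m n -> le (add k m) (add k n).
Proof.
move=> h; rewrite -(sup2 h) lm_add_sup; last by exists m; left.
by apply: lm_sup_ub; exists m => //; left.
Qed.

Lemma add_mono2 (a b c d : M) : le a b -> le c d -> le (add a c) (add b d).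
Proof.
move=> h1 h2; apply: lm_le_trans (add_mono a h2) _.
rewrite (lm_addC a) (lm_addC b); exact: add_mono.
Qed.

Lemma act_mono r (m n : M) : le m n -> le (act r m) (act r n).
Proof.
move=> h; rewrite -(sup2 h) lm_act_sup.
by apply: lm_sup_ub; exists m => //; left.
Qed.

Lemma colon_mono (n m : M) : le n m -> colon n `<=` colon m.
Proof. by move=> h r /= hr; apply: lm_le_trans hr h. Qed.

Lemma zero_le (p : M) : submodule_elt p -> le (lm_zero M) p.
Proof. by move=> [_ h]; have := h 0; rewrite lm_act0r. Qed.

Lemma colon_prime (p : M) : prime_elt p -> prime_ideal (colon p) /\ Ann M `<=` colon p.
Proof.
move=> [[hadd hact] [hne hpr]]; have hz := zero_le (conj hadd hact).
split; last by move=> r /= hr; apply: lm_le_trans hr hz.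
split; [split; [|split]|split].
- by rewrite /colon /= lm_act0r.
- move=> x y /= hx hy; apply: lm_le_trans (lm_addr_act _ _ _) _.
  exact: lm_le_trans (add_mono2 hx hy) hadd.
- move=> r x /= hx; rewrite /colon /= lm_actM.
  exact: lm_le_trans (act_mono r hx) (hact r).
- move=> /= h1; apply: hne; apply: lm_le_antisym (lm_top_greatest _) _.
  by rewrite /colon /= lm_act1 in h1.
- move=> a b /= hab; rewrite /colon /= lm_actM in hab.
  by case: (hpr _ _ hab); [left|right].
Qed.

Definition inf (T : set M) := lm_sup [set x | forall q, T q -> le x q].

Lemma inf_lb (T : set M) q : T q -> le (inf T) q.
Proof. by move=> hq; apply: lm_sup_least => x /= /(_ q hq). Qed.

Lemma inf_glb (T : set M) x : (forall q, T q -> le x q) -> le x (inf T).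
Proof. by move=> h; apply: lm_sup_ub. Qed.

Lemma inf_sub (T : set M) : (forall q, T q -> submodule_elt q) -> submodule_elt (inf T).
Proof.
move=> hT; split.
  apply: inf_glb => q hq; have [ha _] := hT q hq.
  exact: lm_le_trans (add_mono2 (inf_lb hq) (inf_lb hq)) ha.
move=> r; apply: inf_glb => q hq; have [_ ha] := hT q hq.
exact: lm_le_trans (act_mono r (inf_lb hq)) (ha r).
Qed.

Definition VJ (J : set R) : set M := [set q | prime_elt q /\ J `<=` colon q].

Lemma closed_VJ J : zclosed (VJ J).
Proof.
exists (inf (VJ J)); split.
  by apply: inf_sub => q [[hs _] _].
apply/seteqP; split => q /= [hq hJ]; split => //.
  exact: colon_mono (inf_lb (conj hq hJ)).
move=> r hr; apply: hJ => /=; apply: inf_glb => q' [_ h']; exact: h'.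
Qed.

Definition IY (Y : set M) : set R := [set r | forall q, Y q -> colon q r].

Lemma IY_prime (Y : set M) : zirreducible Y -> prime_over (Ann M) (IY Y).
Proof.
move=> [hS [[y0 hy0] hirr]].
have hP q : Y q -> prime_ideal (colon q) /\ Ann M `<=` colon q.
  by move=> hq; apply: colon_prime; apply: hS.
split; last by move=> r hr q hq; apply: (hP q hq).2.
split; [split; [|split]|split].
- by move=> q hq; have [[[h _] _] _] := hP q hq.
- by move=> x y hx hy q hq; have [[[_ [h _]] _] _] := hP q hq; apply: h; [apply: hx|apply: hy].
- by move=> r x hx q hq; have [[[_ [_ h]] _] _] := hP q hq; apply: h; apply: hx.
- by move=> h; have [[_ [h1 _]] _] := hP y0 hy0; apply: h1; apply: h.
- move=> a b hab.
  have hcov : Y `<=` VJ [set a] `|` VJ [set b].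
    move=> q hq; have [[_ [_ h]] _] := hP q hq.
    have hpq : prime_elt q by apply: hS.
    case: (h a b (hab q hq)) => ha; [left|right]; split => // x /= -> //.
  case: (hirr _ _ (closed_VJ _) (closed_VJ _) hcov) => h; [left|right] => q hq;
    by have [_ ] := h q hq; apply.
Qed.

Lemma Vstar_irr (p : M) : prime_elt p -> zclosed (Vstar p) /\ zirreducible (Vstar p).
Proof.
move=> hp; split; first by exists p; split => //; case: hp.
split; first by move=> q [].
split; first by exists p; split.
move=> F1 F2 [n1 [_ ->]] [n2 [_ ->]] hcov.
have hpp : Vstar p p by split.
case: (hcov p hpp) => [[_ h]|[_ h]]; [left|right] => q [hq hq']; split => //;
  exact: subset_trans h hq'.
Qed.

Lemma key (Y : set M) :
  (forall P : set R, prime_over (Ann M) P -> exists p : M, SpecM p /\ colon p = P) ->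
  zirreducible Y -> exists p, SpecM p /\ colon p = IY Y /\ Y `<=` Vstar p.
Proof.
move=> surj hY; have [p [hp hc]] := surj _ (IY_prime hY).
exists p; split => //; split => // q hq; split; first by case: hY => h _; apply: h.
by rewrite hc => r; apply.
Qed.

End Helpers.

Theorem theorem6p6 (R : comNzRingType) (M : leModule R)
  (psi_surj : forall P : set R, prime_over (Ann M) P ->
                exists p : M, SpecM p /\ colon p = P) :
  (* (i) *)
  ((forall Y : set M, (zclosed Y /\ zirreducible Y) <-> exists p, SpecM p /\ Y = Vstar p)
   /\ (forall Y : set M, zclosed Y -> zirreducible Y -> exists y, generic_point Y y))
  (* (ii) p |-> V*(p) maps Spec(M) onto the irreducible closed subsets *)
  /\ ((forall p : M, SpecM p -> zclosed (Vstar p) /\ zirreducible (Vstar p))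
      /\ (forall Y : set M, zclosed Y -> zirreducible Y ->
            exists p, SpecM p /\ Y = Vstar p))
  (* (iii) V*(p) |-> (p:e)/Ann(M) is a bijection from irreducible components
     onto minimal primes of R/Ann(M) *)
  /\ ((forall Y : set M, irreducible_component Y -> exists p, SpecM p /\ Y = Vstar p)
      /\ (forall p q : M, SpecM p -> SpecM q -> Vstar p = Vstar q -> colon p = colon q)
      /\ (forall p : M, SpecM p -> irreducible_component (Vstar p) ->
            minimal_prime_over (Ann M) (colon p))
      /\ (forall p q : M, SpecM p -> SpecM q ->
            irreducible_component (Vstar p) -> irreducible_component (Vstar q) ->
            colon p = colon q -> Vstar p = Vstar q)
      /\ (forall P : set R, minimal_prime_over (Ann M) P ->
            exists p : M, SpecM p /\ irreducible_component (Vstar p) /\ colon p = P)).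
Proof.
Proof.
have Ki (Y : set M) : zclosed Y -> zirreducible Y -> exists p, SpecM p /\ Y = Vstar p.
  move=> [n [hn ->]] hY; have [p [hp [hc hsub]]] := key psi_surj hY.
  exists p; split => //; apply/seteqP; split => // q [hq hpq]; split => //.
  apply: subset_trans hpq; rewrite hc => r hr q' [_ h]; exact: h.
have Vb (p q : M) : SpecM p -> SpecM q -> Vstar p = Vstar q -> colon p = colon q.
  move=> hp hq hpq; apply/seteqP; split.
    have : Vstar q q by split.
    by rewrite -hpq => -[].
  have : Vstar p p by split.
  by rewrite hpq => -[].
split; [split|split; [split|]].
- move=> Y; split; first by move=> [h1 h2]; apply: Ki.
  by move=> [p [hp ->]]; apply: Vstar_irr.
- move=> Y hc hi; have [p [hp hY]] := Ki Y hc hi; exists p; split.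
    by rewrite hY; split.
  rewrite hY; apply/seteqP; split => x hx.
    move=> F hF h1; have hpF := h1 p erefl.
    case: hF => n [_ hF]; subst F; case: hpF => _ h; case: hx => hx1 hx2.
    split => //; exact: subset_trans h hx2.
  by apply: hx; [exists p; split => //; case: hp| move=> y ->; split].
- by move=> p hp; apply: Vstar_irr.
- exact: Ki.
split; [|split; [exact: Vb|split; [|split]]].
- move=> Y [hY hmax]; have [p [hp [hc hsub]]] := key psi_surj hY.
  exists p; split => //; symmetry; apply: hmax hsub; exact: (Vstar_irr hp).2.
- move=> p hp [hirr hmax]; split; first exact: colon_prime.
  move=> Q hQ hQp; have [q [hq hcq]] := psi_surj _ hQ.
  have hsub : Vstar p `<=` Vstar q.
    by move=> x [hx h]; split => //; rewrite hcq; apply: subset_trans hQp h.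
  have := hmax _ (Vstar_irr hq).2 hsub => heq.
  by rewrite -hcq; apply: Vb.
- by move=> p q _ _ _ _ h; rewrite /Vstar h.
- move=> P [hP hmin]; have [p [hp hc]] := psi_surj _ hP.
  exists p; split => //; split => //; split; first exact: (Vstar_irr hp).2.
  move=> Z hZ hsub; have [hZS _] := hZ.
  have hI : IY Z = P.
    apply: hmin; first exact: IY_prime.
    rewrite -hc => r hr; apply: hr; apply: hsub; split => //.
  apply/seteqP; split => // x hx; split; first exact: hZS.
  by rewrite hc -hI => r hr; apply: hr.
Qed.
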